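(* Let $f, g \in \mathrm{Inj}(\Omega)$ and suppose $f = hh_1gh_2h^{-1}$ for some $h \in \mathrm{Sym}(\Omega)$ and $h_1, h_2 \in \mathrm{Fin}(\Omega)$. Then $f \approx_{\mathrm{fin}} g$.
   Context: $\Omega$ is a countably infinite set; maps are written on the right and composed left to right. $\mathrm{Inj}(\Omega)$ is the monoid of injective maps $\Omega\to\Omega$, $\mathrm{Sym}(\Omega)$ the permutation group, $\mathrm{Fin}(\Omega)$ the permutations moving only finitely many points. For $f\in\mathrm{Inj}(\Omega)$, a cycle of $f$ is a nonempty $\Sigma\subseteq\Omega$ such that (a) for all $\alpha\in\Omega$, $(\alpha)f\in\Sigma$ iff $\alpha\in\Sigma$, and (b) no proper nonempty subset of $\Sigma$ satisfies (a). A forward cycle is an infinite cycle $\Sigma$ with $\Sigma\setminus(\Omega)f\ne\emptyset$; an open cycle is an infinite cycle that is not forward. For $n\in\mathbb{Z}_+$, $(f)\mathrm{C}_n$ is the cardinal number of cycles of $f$ of cardinality $n$; $(f)\mathrm{C}_{\mathrm{open}}$, $(f)\mathrm{C}_{\mathrm{fwd}}$ are the numbers of open and forward cycles. $f\approx_{\mathrm{fin}}g$ means: $(f)\mathrm{C}_{\mathrm{open}}=(g)\mathrm{C}_{\mathrm{open}}$; $(f)\mathrm{C}_{\mathrm{fwd}}=(g)\mathrm{C}_{\mathrm{fwd}}$; $(f)\mathrm{C}_n\ne(g)\mathrm{C}_n$ for only finitely many $n\in\mathbb{Z}_+$; and whenever $(f)\mathrm{C}_n\ne(g)\mathrm{C}_n$,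 both are finite. *)

(* Defs.v *)
(* Omega is modelled as nat (a fixed countably infinite set).
   Maps are written on the right in the paper; here they are ordinary
   functions nat -> nat, and the paper's product  h h1 g h2 h^{-1}
   (left to right) becomes  fun x => hinv (h2 (g (h1 (h x)))). *)
From Stdlib Require Import List Arith.
Import ListNotations.

Definition Omega := nat.
Definition subset := Omega -> Prop.

Definition is_inj (f : Omega -> Omega) : Prop := forall x y, f x = f y -> x = y.

Definition is_sym_with_inv (h hinv : Omega -> Omega) : Prop :=
  (forall x, hinv (h x) = x) /\ (forall x, h (hinv x) = x).

Definition is_fin_perm (h : Omega -> Omega) : Prop :=
  (exists hinv, is_sym_with_inv h hinv) /\
  (exists l : list Omega, forall x, h x <> x -> In x l).

Definition f_closed (f : Omega -> Omega) (S : subset) : Prop :=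
  forall a, S (f a) <-> S a.

Definition is_cycle (f : Omega -> Omega) (S : subset) : Prop :=
  (exists a, S a) /\ f_closed f S /\
  ~ (exists T : subset,
       (forall a, T a -> S a) /\ (exists a, S a /\ ~ T a) /\
       (exists a, T a) /\ f_closed f T).

Definition has_card (S : subset) (n : nat) : Prop :=
  exists l : list Omega, NoDup l /\ length l = n /\ (forall x, S x <-> In x l).

Definition is_finite_subset (S : subset) : Prop :=
  exists l : list Omega, forall x, S x -> In x l.

Definition is_infinite_subset (S : subset) : Prop := ~ is_finite_subset S.

Definition is_fwd_cycle (f : Omega -> Omega) (S : subset) : Prop :=
  is_cycle f S /\ is_infinite_subset S /\ (exists x, S x /\ forall y, f y <> x).

Definition is_open_cycle (f : Omega -> Omega) (S : subset) : Prop :=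
  is_cycle f S /\ is_infinite_subset S /\ ~ is_fwd_cycle f S.

Definition is_n_cycle (f : Omega -> Omega) (n : nat) (S : subset) : Prop :=
  is_cycle f S /\ has_card S n.

Definition same_card (P Q : subset -> Prop) : Prop :=
  exists (F : {S | P S} -> {S | Q S}) (G : {S | Q S} -> {S | P S}),
    (forall x, G (F x) = x) /\ (forall y, F (G y) = y).

Definition finite_family (P : subset -> Prop) : Prop :=
  exists l : list subset, forall S, P S -> In S l.

Definition approx_fin (f g : Omega -> Omega) : Prop :=
  same_card (is_open_cycle f) (is_open_cycle g) /\
  same_card (is_fwd_cycle f) (is_fwd_cycle g) /\
  (exists N, forall n, N <= n -> same_card (is_n_cycle f n) (is_n_cycle g n)) /\
  (forall n, 1 <= n -> ~ same_card (is_n_cycle f n) (is_n_cycle g n) ->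
     finite_family (is_n_cycle f n) /\ finite_family (is_n_cycle g n)).

(* Main.v *)
Require Import Defs.
From Stdlib Require Import FinFun List Arith Lia Classical ClassicalEpsilon FunctionalExtensionality PropExtensionality ProofIrrelevance.
Import ListNotations.


Definition iso {X Y : Type} (P : X -> Prop) (Q : Y -> Prop) : Prop :=
  exists (F : {x | P x} -> {y | Q y}) (G : {y | Q y} -> {x | P x}),
    (forall x, G (F x) = x) /\ (forall y, F (G y) = y).

Lemma sig_eq {X} {P : X -> Prop} (a b : {x | P x}) : proj1_sig a = proj1_sig b -> a = b.
Proof. destruct a as [a pa], b as [b pb]; simpl; intros ->. f_equal; apply proof_irrelevance. Qed.

Lemma iso_lift {X Y} (P : X -> Prop) (Q : Y -> Prop) (phi : X -> Y) (psi : Y -> X) :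
  (forall x, P x -> Q (phi x)) -> (forall y, Q y -> P (psi y)) ->
  (forall x, P x -> psi (phi x) = x) -> (forall y, Q y -> phi (psi y) = y) -> iso P Q.
Proof.
  intros H1 H2 H3 H4.
  exists (fun s => exist _ (phi (proj1_sig s)) (H1 _ (proj2_sig s))).
  exists (fun s => exist _ (psi (proj1_sig s)) (H2 _ (proj2_sig s))).
  split; intros [x p]; apply sig_eq; simpl; auto.
Qed.

Lemma iso_sym {X Y} (P : X -> Prop) (Q : Y -> Prop) : iso P Q -> iso Q P.
Proof. intros (F & G & h1 & h2). exists G, F; auto. Qed.

Lemma iso_trans {X Y Z} (P : X -> Prop) (Q : Y -> Prop) (R : Z -> Prop) : iso P Q -> iso Q R -> iso P R.
Proof.
  intros (F & G & h1 & h2) (F' & G' & h1' & h2').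
  exists (fun x => F' (F x)), (fun z => G (G' z)). split; intros; [rewrite h1', h1|rewrite h2, h2']; auto.
Qed.

Lemma iso_ext {X} (P Q : X -> Prop) : (forall x, P x <-> Q x) -> iso P Q.
Proof. intros H. apply (iso_lift P Q id id); firstorder. Qed.

Definition fin {X} (P : X -> Prop) := exists l : list X, forall x, P x -> In x l.

Section Hotel.
Variable X : Type.
Variable x0 : X.
Variable A : X -> Prop.
Hypothesis Ainf : ~ fin A.

Definition nxt (l : list X) : X := epsilon (inhabits x0) (fun x => A x /\ ~ In x l).
Lemma nxt_spec l : A (nxt l) /\ ~ In (nxt l) l.
Proof.
  unfold nxt. apply epsilon_spec. apply NNPP; intro H. apply Ainf. exists l.
  intros x Ax. apply NNPP; intro. apply H; eauto.
Qed.
Fixpoint LL n := match n with 0 => [] | S n => nxt (LL n) :: LL n end.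
Definition sq n := nxt (LL n).
Lemma sq_A n : A (sq n). Proof. apply nxt_spec. Qed.
Lemma sq_in i j : i < j -> In (sq i) (LL j).
Proof. induction j; intros H; [lia|]. simpl. destruct (Nat.eq_dec i j); [subst; left; reflexivity|right; apply IHj; lia]. Qed.
Lemma sq_inj i j : sq i = sq j -> i = j.
Proof.
  intros H. destruct (lt_eq_lt_dec i j) as [[h|h]|h]; auto.
  - exfalso. apply (proj2 (nxt_spec (LL j))). fold (sq j). rewrite <- H. now apply sq_in.
  - exfalso. apply (proj2 (nxt_spec (LL i))). fold (sq i). rewrite H. now apply sq_in.
Qed.

Lemma hotel1 (P : X -> Prop) (a : X) : (forall x, A x -> P x) -> P a -> ~ A a ->
  iso P (fun x => P x /\ x <> a).
Proof.
  intros HAP Pa nAa.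
  set (isq := fun x => exists i, x = sq i).
  set (phi := fun x => if excluded_middle_informative (x = a) then sq 0 else
                  match excluded_middle_informative (isq x) with
                  | left h => sq (S (proj1_sig (constructive_indefinite_description _ h)))
                  | right _ => x end).
  set (psi := fun y => match excluded_middle_informative (isq y) with
                  | left h => match proj1_sig (constructive_indefinite_description _ h) with
                              | 0 => a | S i => sq i end
                  | right _ => y end).
  assert (sqa : forall i, sq i <> a) by (intros i e; apply nAa; rewrite <- e; apply sq_A).
  assert (Ephi : forall x, x <> a -> forall i, x = sq i -> phi x = sq (S i)).
  { intros x hx i hi. unfold phi. destruct excluded_middle_informative; [contradiction|].
    destruct excluded_middle_informative as [h|h]; [|exfalso; apply h; exists i; auto].
    destruct constructive_indefinite_description as [j hj]; simpl. subst x. apply sq_inj in hj. subst; auto. }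
  assert (Ephi2 : forall x, x <> a -> (forall i, x <> sq i) -> phi x = x).
  { intros x hx hi. unfold phi. destruct excluded_middle_informative; [contradiction|].
    destruct excluded_middle_informative as [h|h]; auto. destruct h as [i ->]. exfalso; eapply hi; eauto. }
  assert (Ephia : phi a = sq 0).
  { unfold phi. destruct excluded_middle_informative; [auto|contradiction]. }
  assert (Epsi : forall i, psi (sq i) = match i with 0 => a | S j => sq j end).
  { intros i. unfold psi. destruct excluded_middle_informative as [h|h]; [|exfalso; apply h; exists i; auto].
    destruct constructive_indefinite_description as [j hj]; simpl. apply sq_inj in hj. subst; auto. }
  assert (Epsi2 : forall y, (forall i, y <> sq i) -> psi y = y).
  { intros y hy. unfold psi. destruct excluded_middle_informative as [h|h]; auto. destruct h as [i ->]. exfalso; eapply hy; eauto. }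
  apply (iso_lift _ _ phi psi).
  - intros x Px. destruct (classic (x = a)) as [->|ne].
    + rewrite Ephia. split; auto. apply HAP, sq_A.
    + destruct (classic (exists i, x = sq i)) as [[i hi]|hn].
      * rewrite (Ephi x ne i hi). split; [apply HAP, sq_A|auto].
      * rewrite Ephi2; auto. intros i e; apply hn; eauto.
  - intros y [Py ne]. destruct (classic (exists i, y = sq i)) as [[i ->]|hn].
    + rewrite Epsi. destruct i; auto; apply HAP, sq_A.
    + rewrite Epsi2; auto. intros i e; apply hn; eauto.
  - intros x Px. destruct (classic (x = a)) as [->|ne].
    + rewrite Ephia, Epsi; auto.
    + destruct (classic (exists i, x = sq i)) as [[i hi]|hn].
      * rewrite (Ephi x ne i hi), Epsi; auto.
      * rewrite Ephi2, Epsi2; auto; intros i e; apply hn; eauto.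
  - intros y [Py ne]. destruct (classic (exists i, y = sq i)) as [[i ->]|hn].
    + rewrite Epsi. destruct i; auto.
    + rewrite Epsi2, Ephi2; auto; intros i e; apply hn; eauto.
Qed.

Lemma absorb (l : list X) : forall P : X -> Prop, (forall x, A x -> P x) ->
  (forall x, P x -> ~ A x -> In x l) -> iso P A.
Proof.
  induction l as [|a l IH]; intros P HAP Hl.
  - apply iso_ext. intros x; split; auto. intros Px. apply NNPP; intro h. apply (Hl x Px h).
  - destruct (classic (P a /\ ~ A a)) as [[Pa nAa]|hn].
    + eapply iso_trans. apply (hotel1 P a HAP Pa nAa).
      apply IH. intros x Ax; split; auto. intros ->; auto.
      intros x [Px ne] nA. destruct (Hl x Px nA); [congruence|auto].
    + apply IH; auto. intros x Px nA. destruct (Hl x Px nA); auto. subst; exfalso; auto.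
Qed.
End Hotel.

Lemma hotel {X} (x0 : X) (P1 P2 M : X -> Prop) :
  (forall x, ~ M x -> (P1 x <-> P2 x)) -> fin (fun x => P1 x /\ M x) -> fin (fun x => P2 x /\ M x) ->
  ~ fin (fun x => P1 x /\ ~ M x) -> iso P1 P2.
Proof.
  intros He [l1 h1] [l2 h2] ninf.
  eapply iso_trans. apply (absorb X x0 _ ninf l1); [tauto|].
  intros x Px h. apply h1. split; auto. apply NNPP; intro; apply h; auto.
  apply iso_sym. apply (absorb X x0 _ ninf l2). intros x [Px nM]; apply He; auto.
  intros x Px h. apply h2. split; auto. apply NNPP; intro; apply h; split; auto. apply He; auto.
Qed.


Fixpoint it (f : nat -> nat) n x := match n with 0 => x | S n => f (it f n x) end.

Lemma it_add f m n x : it f (m + n) x = it f m (it f n x).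
Proof. induction m; simpl; congruence. Qed.
Lemma it_S' f n x : it f (S n) x = it f n (f x).
Proof. replace (S n) with (n + 1) by lia. rewrite it_add. reflexivity. Qed.
Lemma it_inj f : is_inj f -> forall n x y, it f n x = it f n y -> x = y.
Proof. intros Hf n; induction n; simpl; auto. Qed.
Lemma closed_it f S : f_closed f S -> forall n x, S (it f n x) <-> S x.
Proof. intros H n; induction n; simpl; intros; [tauto|]. split; intro h; [apply IHn, H|apply H, IHn]; auto. Qed.

Definition comp f a x := exists m n, it f m x = it f n a.

Lemma comp_refl f a : comp f a a. Proof. exists 0, 0; auto. Qed.
Lemma comp_closed f a : f_closed f (comp f a).
Proof.
  intros x; split; intros (m & n & h).
  - exists (S m), n. rewrite it_S'; auto.
  - exists m, (S n). rewrite <- it_S'. simpl. congruence.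
Qed.
Lemma comp_sub f S a : f_closed f S -> S a -> forall x, comp f a x -> S x.
Proof. intros HS Sa x (m & n & h). apply (closed_it f S HS m). rewrite h. apply closed_it; auto. Qed.

Lemma cycle_comp f S a : is_cycle f S -> S a -> forall x, S x <-> comp f a x.
Proof.
  intros (ne & cl & mn) Sa x. split; [|apply comp_sub; auto].
  intros Sx. apply NNPP; intro nc. apply mn. exists (comp f a). repeat split.
  - apply comp_sub; auto.
  - exists x; auto.
  - exists a; apply comp_refl.
  - apply comp_closed.
  - apply comp_closed.
Qed.

Lemma comp_cycle f a : is_cycle f (comp f a).
Proof.
  split; [exists a; apply comp_refl|split; [apply comp_closed|]].
  intros (T & sub & (x & cx & nT) & (t & Tt) & cT). apply nT.
  assert (Ta : T a).
  { destruct (sub t Tt) as (m & n & h). apply (closed_it f T cT n). rewrite <- h. apply closed_it; auto. }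
  apply (comp_sub f T a cT Ta); auto.
Qed.

Lemma cycle_is_comp f S a : is_cycle f S -> S a -> S = comp f a.
Proof. intros. apply functional_extensionality; intros x. apply propositional_extensionality. apply cycle_comp; auto. Qed.

Lemma cycle_eq f S T a : is_cycle f S -> is_cycle f T -> S a -> T a -> S = T.
Proof. intros. rewrite (cycle_is_comp f S a), (cycle_is_comp f T a); auto. Qed.

Lemma comp_sym f a x : comp f a x -> comp f x a.
Proof. intros (m & n & h); exists n, m; auto. Qed.

Lemma it_cancel f : is_inj f -> forall m n x y, it f m x = it f n y ->
  exists d, it f d x = y \/ it f d y = x.
Proof.
  intros Hf m n x y h. destruct (le_lt_dec m n).
  - exists (n - m). right. apply (it_inj f Hf m). rewrite <- it_add. replace (m + (n - m)) with n by lia. auto.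
  - exists (m - n). left. apply (it_inj f Hf n). rewrite <- it_add. replace (n + (m - n)) with m by lia. auto.
Qed.

Lemma pigeon (u : nat -> nat) (l : list nat) : (forall i j, u i = u j -> i = j) ->
  exists N, forall i, N <= i -> ~ In (u i) l.
Proof.
  intros Hu. induction l as [|a l [N HN]].
  - exists 0; simpl; auto.
  - destruct (classic (exists i, u i = a)) as [[i hi]|hn].
    + exists (max N (S i)). intros j hj [e|e].
      * subst a. apply Hu in e. lia.
      * apply (HN j); auto; lia.
    + exists N. intros j hj [e|e]; [apply hn; eauto|apply (HN j); auto].
Qed.

Lemma finite_periodic f S x : is_inj f -> f_closed f S -> is_finite_subset S -> S x ->
  exists p, 1 <= p /\ it f p x = x.
Proof.
  intros Hf cl [l hl] Sx.
  destruct (classic (forall i j, it f i x = it f j x -> i = j)) as [h|h].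
  - destruct (pigeon _ l h) as [N HN]. exfalso. apply (HN N); auto. apply hl. apply closed_it; auto.
  - apply NNPP; intro np. apply h. intros i j e.
    destruct (lt_eq_lt_dec i j) as [[c|c]|c]; auto; exfalso; apply np.
    + exists (j - i). split; [lia|]. apply (it_inj f Hf i). rewrite <- it_add. replace (i + (j - i)) with j by lia. auto.
    + exists (i - j). split; [lia|]. apply (it_inj f Hf j). rewrite <- it_add. replace (j + (i - j)) with i by lia. auto.
Qed.

Lemma periodic_mul f p x : it f p x = x -> forall q t, it f (q + t * p) x = it f q x.
Proof.
  intros h q t. induction t; simpl. f_equal; lia.
  replace (q + (p + t * p)) with (p + (q + t * p)) by lia. rewrite it_add, IHt.
  rewrite <- it_add. replace (p + q) with (q + p) by lia. rewrite it_add, h; auto.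
Qed.

Lemma it_mod f p x : 1 <= p -> it f p x = x -> forall a, it f a x = it f (a mod p) x.
Proof.
  intros hp h a. rewrite (Nat.div_mod_eq a p) at 1.
  replace (p * (a / p) + a mod p) with (a mod p + (a / p) * p) by lia. apply periodic_mul; auto.
Qed.

Lemma periodic_finite f x p : is_inj f -> 1 <= p -> it f p x = x -> is_finite_subset (comp f x).
Proof.
  intros Hf hp h. exists (map (fun q => it f q x) (seq 0 p)). intros y (m & n & e).
  apply in_map_iff. exists ((n + m * p - m) mod p). split.
  - apply (it_inj f Hf m). rewrite <- it_add, e.
    rewrite (it_mod f p x hp h n), (it_mod f p x hp h (m + _)).
    rewrite Nat.Div0.add_mod_idemp_r. assert (m*p >= m) by nia.
    replace (m + (n + m * p - m)) with (n + m * p) by lia. rewrite Nat.Div0.mod_add. auto.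
  - apply in_seq. split; [lia|]. apply Nat.mod_upper_bound. lia.
Qed.


Definition nimg (f : nat -> nat) x := forall y, f y <> x.
Definition Ent f (W : list nat) x := ~ In x W /\ In (f x) W /\ forall n y, it f n y = x -> ~ In y W.
Definition RepP f W x := Ent f W x \/ (In x W /\ nimg f x).
Definition infback f x := forall n, exists y, it f n y = x.
Definition meets (W : list nat) (S : subset) := exists x, S x /\ In x W.

Lemma least (P : nat -> Prop) j : P j -> exists j0, P j0 /\ forall i, i < j0 -> ~ P i.
Proof.
  induction j as [j IH] using lt_wf_ind. intros Pj.
  destruct (classic (exists i, i < j /\ P i)) as [[i [hi Pi]]|hn].
  - apply (IH i hi Pi).
  - exists j; split; auto. intros i hi Pi; apply hn; eauto.
Qed.

Lemma greatest (P : nat -> Prop) N : P 0 -> (forall i, N <= i -> ~ P i) -> exists m, P m /\ forall i, m < i -> ~ P i.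
Proof.
  revert P; induction N; intros P P0 HN.
  - exfalso; apply (HN 0); auto.
  - destruct (classic (P N)) as [h|h].
    + exists N; split; auto; intros i hi; apply HN; lia.
    + apply IHN; auto. intros i hi. destruct (Nat.eq_dec i N); [subst; auto|apply HN; lia].
Qed.

Section F.
Variable f : nat -> nat.
Hypothesis Hf : is_inj f.
Variable W : list nat.

Lemma open_infback C x : is_cycle f C -> ~ (exists x, C x /\ nimg f x) -> C x -> infback f x.
Proof.
  intros (ne & cl & mn) nf Sx n. revert x Sx. induction n; intros x Sx.
  - exists x; auto.
  - assert (exists y, f y = x) as [y hy].
    { apply NNPP; intro h. apply nf. exists x; split; auto. intros y e; apply h; eauto. }
    assert (Sy : C y) by (apply cl; rewrite hy; auto).
    destruct (IHn y Sy) as [z hz]. exists z. simpl. congruence.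
Qed.

Lemma fwd_start C s x : is_cycle f C -> C s -> nimg f s -> C x -> exists j, x = it f j s.
Proof.
  intros cyc Ss ns Sx. apply (cycle_comp f C s cyc Ss) in Sx. destruct Sx as (m & n & h).
  destruct (le_lt_dec m n).
  - exists (n - m). apply (it_inj f Hf m). rewrite <- it_add. replace (m + (n - m)) with n by lia. auto.
  - exfalso. apply (ns (it f (m - n - 1) x)). apply (it_inj f Hf n).
    rewrite <- h. change (f (it f (m - n - 1) x)) with (it f (S (m - n - 1)) x).
    rewrite <- it_add. f_equal. lia.
Qed.

Lemma fwd_not_infback C s x : is_cycle f C -> C s -> nimg f s -> C x -> ~ infback f x.
Proof.
  intros cyc Ss ns Sx ib. destruct (fwd_start C s x cyc Ss ns Sx) as [j ->].
  destruct (ib (S j)) as [y hy]. rewrite it_S' in hy. apply (ns y). apply (it_inj f Hf j); auto.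
Qed.

Lemma kind_fwd C x : is_cycle f C -> is_infinite_subset C -> C x -> (is_fwd_cycle f C <-> ~ infback f x).
Proof.
  intros cyc inf Sx. split.
  - intros (_ & _ & s & Ss & ns). apply (fwd_not_infback C s x); auto.
  - intros nib. split; auto. split; auto. apply NNPP; intro h. apply nib. apply (open_infback C x); auto.
Qed.

Lemma kind_open C x : is_cycle f C -> is_infinite_subset C -> C x -> (is_open_cycle f C <-> infback f x).
Proof.
  intros cyc inf Sx. unfold is_open_cycle. rewrite (kind_fwd C x); auto. split.
  - intros (_ & _ & h). apply NNPP; auto.
  - tauto.
Qed.

Lemma rep_step x y d : it f d x = y -> RepP f W x -> RepP f W y -> d = 0.
Proof.
  intros e rx ry. destruct d; auto. exfalso.
  destruct ry as [(ny & fy & chy)|(wy & niy)].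
  - destruct rx as [(nx & fx & chx)|(wx & nix)].
    + apply (chy d (f x)); auto. rewrite <- it_S'. auto.
    + apply (chy (S d) x); auto.
  - apply (niy (it f d x)). auto.
Qed.

Lemma rep_unique C x y : is_cycle f C -> C x -> C y -> RepP f W x -> RepP f W y -> x = y.
Proof.
  intros cyc Sx Sy rx ry. apply (cycle_comp f C x cyc Sx) in Sy. destruct Sy as (m & n & h).
  destruct (it_cancel f Hf m n y x h) as [d [e|e]].
  - pose proof (rep_step y x d e ry rx). subst; auto.
  - pose proof (rep_step x y d e rx ry). subst; auto.
Qed.

Lemma rep_infinite x : RepP f W x -> is_infinite_subset (comp f x).
Proof.
  intros rx fin. destruct (finite_periodic f (comp f x) x Hf (comp_closed f x) fin (comp_refl f x)) as [p [hp e]].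
  pose proof (rep_step x x p e rx rx). lia.
Qed.

Lemma cycle_inf_noper C x p : is_cycle f C -> is_infinite_subset C -> C x -> 1 <= p -> it f p x <> x.
Proof.
  intros cyc inf Sx hp e. apply inf. rewrite (cycle_is_comp f C x); auto. apply (periodic_finite f x p); auto.
Qed.

Definition pre y := epsilon (inhabits 0) (fun z => f z = y).
Fixpoint bk w n := match n with 0 => w | S n => pre (bk w n) end.

Lemma rep_exists C : is_cycle f C -> is_infinite_subset C -> meets W C -> exists x, C x /\ RepP f W x.
Proof.
  intros cyc inf [w [Sw Ww]]. pose proof cyc as (ne & cl & mn).
  destruct (classic (exists s, C s /\ nimg f s)) as [[s [Ss ns]]|nf].
  - destruct (classic (In s W)) as [sW|sW].
    + exists s; split; auto; right; auto.
    + destruct (fwd_start C s w cyc Ss ns Sw) as [j hj].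
      destruct (least (fun j => In (it f j s) W) j) as [j0 [h0 hl]]; [rewrite <- hj; auto|].
      destruct j0 as [|m]; [contradiction|].
      exists (it f m s). split; [apply closed_it; auto|]. left. split; [apply hl; lia|split; auto].
      intros n y e. destruct (le_lt_dec n m).
      * replace m with (n + (m - n)) in e by lia. rewrite it_add in e. apply it_inj in e; auto.
        subst y. apply hl. lia.
      * exfalso. apply (ns (it f (n - m - 1) y)). apply (it_inj f Hf m).
        rewrite <- e. change (f (it f (n - m - 1) y)) with (it f (S (n - m - 1)) y).
        rewrite <- it_add. f_equal. lia.
  - assert (HB : forall n, C (bk w n) /\ f (bk w (S n)) = bk w n).
    { induction n as [|n [Sn _]].
      - simpl. split; auto. unfold pre. apply epsilon_spec. apply NNPP; intro h; apply nf. exists w; split; auto.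
        intros y e; apply h; eauto.
      - assert (ex : exists z, f z = bk w n).
        { apply NNPP; intro h; apply nf. exists (bk w n); split; auto. intros y e; apply h; eauto. }
        assert (e1 : f (bk w (S n)) = bk w n) by (simpl; unfold pre; apply epsilon_spec; auto).
        assert (S1 : C (bk w (S n))) by (apply cl; rewrite e1; auto).
        split; auto. simpl. unfold pre at 1. apply epsilon_spec. apply NNPP; intro h; apply nf.
        exists (bk w (S n)); split; auto. intros y e; apply h; eauto. }
    assert (Hit : forall j n, it f n (bk w (j + n)) = bk w j).
    { intros j n. induction n; simpl. f_equal; lia.
      change (it f (S n) (bk w (j + S n)) = bk w j). rewrite Nat.add_succ_r, it_S'. rewrite (proj2 (HB (j + n))). auto. }
    assert (Hinj : forall i j, bk w i = bk w j -> i = j).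
    { intros i j e. destruct (lt_eq_lt_dec i j) as [[c|c]|c]; auto; exfalso.
      - apply (cycle_inf_noper C (bk w j) (j - i)); auto. apply HB. lia.
        rewrite <- e at 2. rewrite <- (Hit i (j - i)). f_equal. f_equal. lia.
      - apply (cycle_inf_noper C (bk w i) (i - j)); auto. apply HB. lia.
        rewrite e at 2. rewrite <- (Hit j (i - j)). f_equal. f_equal. lia. }
    destruct (pigeon (bk w) W Hinj) as [N HN].
    destruct (greatest (fun i => In (bk w i) W) N) as [m [hm hg]]; auto.
    exists (bk w (S m)). split; [apply HB|]. left. split; [apply hg; lia|]. split.
    + rewrite (proj2 (HB m)). auto.
    + intros n y e. rewrite <- (Hit (S m) n) in e. apply it_inj in e; auto. subst y. apply hg. lia.
Qed.

End F.


Lemma rep_glue (Q1 Q2 M : subset -> Prop) (R1 R2 : nat -> Prop) (c1 c2 : nat -> subset) :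
  (forall S, ~ M S -> (Q1 S <-> Q2 S)) -> (forall n, R1 n <-> R2 n) ->
  (forall S, Q1 S -> M S -> exists n, S n /\ R1 n) ->
  (forall S, Q2 S -> M S -> exists n, S n /\ R2 n) ->
  (forall S n n', Q1 S -> S n -> S n' -> R1 n -> R1 n' -> n = n') ->
  (forall S n n', Q2 S -> S n -> S n' -> R2 n -> R2 n' -> n = n') ->
  (forall n, R1 n -> Q1 (c1 n) /\ M (c1 n) /\ c1 n n) ->
  (forall n, R2 n -> Q2 (c2 n) /\ M (c2 n) /\ c2 n n) ->
  (forall S n, Q1 S -> S n -> S = c1 n) ->
  (forall S n, Q2 S -> S n -> S = c2 n) ->
  iso Q1 Q2.
Proof.
  intros HQ HR E1 E2 U1 U2 C1 C2 Q1e Q2e.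
  set (r1 := fun S : subset => epsilon (inhabits 0) (fun n => S n /\ R1 n)).
  set (r2 := fun S : subset => epsilon (inhabits 0) (fun n => S n /\ R2 n)).
  set (phi := fun S => if excluded_middle_informative (M S) then c2 (r1 S) else S).
  set (psi := fun S => if excluded_middle_informative (M S) then c1 (r2 S) else S).
  assert (r1s : forall S, Q1 S -> M S -> S (r1 S) /\ R1 (r1 S)).
  { intros S q m. apply epsilon_spec. auto. }
  assert (r2s : forall S, Q2 S -> M S -> S (r2 S) /\ R2 (r2 S)).
  { intros S q m. apply epsilon_spec. auto. }
  apply (iso_lift _ _ phi psi).
  - intros S q. unfold phi. destruct excluded_middle_informative as [m|m].
    + apply C2, HR, r1s; auto.
    + apply HQ; auto.
  - intros S q. unfold psi. destruct excluded_middle_informative as [m|m].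
    + apply C1, HR, r2s; auto.
    + apply HQ; auto.
  - intros S q. unfold phi. destruct excluded_middle_informative as [m|m].
    + destruct (r1s S q m) as [h1 h2]. apply HR in h2 as h2'. destruct (C2 _ h2') as (q2 & m2 & i2).
      unfold psi. destruct excluded_middle_informative as [m'|m']; [|contradiction].
      destruct (r2s _ q2 m2) as [h3 h4].
      rewrite (U2 _ _ _ q2 h3 i2 h4 h2'). symmetry. apply Q1e; auto.
    + unfold psi. destruct excluded_middle_informative; [contradiction|auto].
  - intros S q. unfold psi. destruct excluded_middle_informative as [m|m].
    + destruct (r2s S q m) as [h1 h2]. apply HR in h2 as h2'. destruct (C1 _ h2') as (q2 & m2 & i2).
      unfold phi. destruct excluded_middle_informative as [m'|m']; [|contradiction].
      destruct (r1s _ q2 m2) as [h3 h4].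
      rewrite (U1 _ _ _ q2 h3 i2 h4 h2'). symmetry. apply Q2e; auto.
    + unfold phi. destruct excluded_middle_informative; [contradiction|auto].
Qed.

Definition rel (g k : nat -> nat) (W : list nat) := exists s : nat -> nat,
  (forall x, k x = g (s x)) /\ (forall x, ~ In x W -> s x = x) /\ (forall x, In x W -> In (s x) W).

Definition avoids (W : list nat) (C : subset) := forall x, C x -> ~ In x W.

Section Pair.
Variables g k : nat -> nat.
Variable W : list nat.

Lemma closed_tr C : rel g k W -> avoids W C -> f_closed g C -> f_closed k C.
Proof.
  intros (s & hk & h1 & h2) av cl a. rewrite hk.
  destruct (classic (In a W)) as [aW|aW].
  - split; intro h; exfalso.
    + apply (proj1 (cl (s a))) in h. apply (av _ h). apply h2; auto.
    + apply (av a); auto.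
  - rewrite h1; auto.
Qed.

Lemma nimg_tr x : rel g k W -> nimg g x -> nimg k x.
Proof. intros (s & hk & _) n y e. apply (n (s y)). rewrite <- hk; auto. Qed.

Lemma chain_tr x : rel g k W -> (forall n y, it g n y = x -> ~ In y W) ->
  forall n y, it k n y = x -> it g n y = x.
Proof.
  intros (s & hk & h1 & h2) P n. induction n; intros y e; auto.
  rewrite it_S' in e. apply IHn in e. rewrite it_S'.
  destruct (classic (In y W)) as [yW|yW].
  - exfalso. apply (P (S n) (s y)); auto. rewrite it_S', <- hk; auto.
  - rewrite hk, h1 in e; auto.
Qed.

Lemma Ent_tr x : rel g k W -> Ent g W x -> Ent k W x.
Proof.
  intros r (nx & fx & ch). split; auto. split.
  - destruct r as (s & hk & h1 & h2). rewrite hk, h1; auto.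
  - intros n y e. apply (ch n y). apply (chain_tr x r ch n y e).
Qed.

Lemma RepP_tr x : rel g k W -> RepP g W x -> RepP k W x.
Proof. intros r [h|[h1 h2]]; [left; apply Ent_tr; auto|right; split; auto; apply nimg_tr; auto]. Qed.

End Pair.

Lemma infback_tr g k W x : rel k g W -> Ent k W x -> infback g x -> infback k x.
Proof.
  intros r (_ & _ & ch) ib n. destruct (ib n) as [y e]. exists y.
  apply (chain_tr k g W x r ch n y e).
Qed.


Lemma cycle_tr g k W C : rel g k W -> rel k g W -> avoids W C -> is_cycle g C -> is_cycle k C.
Proof.
  intros r1 r2 av (ne & cl & mn). split; auto. split; [apply (closed_tr g k W); auto|].
  intros (T & sub & pr & net & clT). apply mn. exists T. split; [exact sub|split; [exact pr|split; [exact net|]]].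
  apply (closed_tr k g W); auto. intros x Tx; apply av, sub; auto.
Qed.

Lemma Q_tr g k W C : rel g k W -> rel k g W -> avoids W C ->
  (is_open_cycle g C -> is_open_cycle k C) /\ (is_fwd_cycle g C -> is_fwd_cycle k C) /\
  (forall n, is_n_cycle g n C -> is_n_cycle k n C).
Proof.
  intros r1 r2 av.
  assert (fw : forall f1 f2, rel f1 f2 W -> rel f2 f1 W -> is_fwd_cycle f1 C -> is_fwd_cycle f2 C).
  { intros f1 f2 q1 q2 (cy & inf & x & Cx & nx). split; [apply (cycle_tr f1 f2 W); auto|].
    split; auto. exists x; split; auto. apply (nimg_tr f1 f2 W); auto. }
  split; [|split].
  - intros (cy & inf & nf). split; [apply (cycle_tr g k W); auto|]. split; auto.
    intros h; apply nf. apply (fw k g); auto.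
  - apply fw; auto.
  - intros n (cy & hc). split; auto. apply (cycle_tr g k W); auto.
Qed.

Lemma fin_meet f W : fin (fun S => is_cycle f S /\ meets W S).
Proof.
  induction W as [|a W [l hl]].
  - exists []. intros S (_ & x & _ & []).
  - destruct (classic (exists S0, is_cycle f S0 /\ S0 a)) as [[S0 [c0 h0]]|hn].
    + exists (S0 :: l). intros S (cy & x & Sx & [e|xW]).
      * subst x. left. symmetry. apply (cycle_eq f S S0 a); auto.
      * right. apply hl. split; auto. exists x; auto.
    + exists l. intros S (cy & x & Sx & [e|xW]).
      * subst. exfalso; apply hn; eauto.
      * apply hl. split; auto. exists x; auto.
Qed.

Lemma has_card_unique S n m : has_card S n -> has_card S m -> n = m.
Proof.
  intros (l1 & d1 & e1 & h1) (l2 & d2 & e2 & h2). subst.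
  apply Nat.le_antisymm; apply NoDup_incl_length; auto; intros x hx.
  - apply h2, h1; auto.
  - apply h1, h2; auto.
Qed.

Lemma bound f W : exists N, forall n S, is_n_cycle f n S -> meets W S -> n < N.
Proof.
  destruct (fin_meet f W) as [l hl].
  assert (H : forall l : list subset, exists N, forall n S, In S l -> has_card S n -> n < N).
  { induction l0 as [|S0 l0 [N HN]].
    - exists 0; intros n S [].
    - destruct (classic (exists n0, has_card S0 n0)) as [[n0 h0]|hn].
      + exists (max N (S n0)). intros n S [e|i] hc.
        * subst. rewrite (has_card_unique _ _ _ hc h0). lia.
        * specialize (HN n S i hc). lia.
      + exists N. intros n S [e|i] hc; [subst; exfalso; eauto|eauto]. }
  destruct (H l) as [N HN]. exists N. intros n S (cy & hc) m. apply (HN n S); auto.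
Qed.


Definition Ro f W x := RepP f W x /\ infback f x.
Definition Rf f W x := RepP f W x /\ ~ infback f x.

Section One.
Variable f : nat -> nat.
Hypothesis Hf : is_inj f.
Variable W : list nat.

Lemma rep_meets n : RepP f W n -> meets W (comp f n).
Proof.
  intros [(_ & fn & _)|(nW & _)].
  - exists (f n). split; auto. apply comp_closed, comp_refl.
  - exists n; split; auto. apply comp_refl.
Qed.

Lemma open_E S : is_open_cycle f S -> meets W S -> exists n, S n /\ Ro f W n.
Proof.
  intros o m. pose proof o as (cy & inf & _). destruct (rep_exists f Hf W S cy inf m) as [x [Sx rx]].
  exists x. split; auto. split; auto. apply (kind_open f Hf S x); auto.
Qed.
Lemma fwd_E S : is_fwd_cycle f S -> meets W S -> exists n, S n /\ Rf f W n.
Proof.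
  intros o m. pose proof o as (cy & inf & _). destruct (rep_exists f Hf W S cy inf m) as [x [Sx rx]].
  exists x. split; auto. split; auto. apply (kind_fwd f Hf S x); auto.
Qed.
Lemma open_C n : Ro f W n -> is_open_cycle f (comp f n) /\ meets W (comp f n) /\ comp f n n.
Proof.
  intros [r ib]. split; [|split; [apply rep_meets; auto|apply comp_refl]].
  apply (proj2 (kind_open f Hf _ n (comp_cycle f n) (rep_infinite f Hf W n r) (comp_refl f n))); auto.
Qed.
Lemma fwd_C n : Rf f W n -> is_fwd_cycle f (comp f n) /\ meets W (comp f n) /\ comp f n n.
Proof.
  intros [r ib]. split; [|split; [apply rep_meets; auto|apply comp_refl]].
  apply (proj2 (kind_fwd f Hf _ n (comp_cycle f n) (rep_infinite f Hf W n r) (comp_refl f n))); auto.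
Qed.
End One.

Lemma Ro_tr g k W x : rel g k W -> rel k g W -> Ro g W x -> Ro k W x.
Proof.
  intros r1 r2 [rp ib]. split; [apply (RepP_tr g k W); auto|].
  destruct rp as [e|(_ & ni)].
  - apply (infback_tr g k W); auto. apply (Ent_tr g k W); auto.
  - exfalso. destruct (ib 1) as [y e]. apply (ni y); auto.
Qed.
Lemma Rf_tr g k W x : rel g k W -> rel k g W -> Rf g W x -> Rf k W x.
Proof.
  intros r1 r2 [rp nib]. split; [apply (RepP_tr g k W); auto|]. intros ib.
  destruct rp as [e|(_ & ni)].
  - apply nib. apply (infback_tr k g W); auto.
  - destruct (ib 1) as [y e]. apply (nimg_tr g k W x r1 ni y); auto.
Qed.

Lemma not_meets_avoids W S : ~ meets W S -> avoids W S.
Proof. intros h x Sx xW. apply h; exists x; auto. Qed.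

Theorem pair_approx g k W : is_inj g -> is_inj k -> rel g k W -> rel k g W -> approx_fin k g.
Proof.
  intros Hg Hk r1 r2.
  split; [|split; [|split]].
  - apply (rep_glue (is_open_cycle k) (is_open_cycle g) (meets W) (Ro k W) (Ro g W) (comp k) (comp g)).
    + intros S m. apply not_meets_avoids in m. split; [apply (proj1 (Q_tr k g W S r2 r1 m))|apply (proj1 (Q_tr g k W S r1 r2 m))].
    + intros n; split; apply Ro_tr; auto.
    + apply open_E; auto.
    + apply open_E; auto.
    + intros S n n' q Sn Sn' [h _] [h' _]. apply (rep_unique k Hk W S); auto. apply q.
    + intros S n n' q Sn Sn' [h _] [h' _]. apply (rep_unique g Hg W S); auto. apply q.
    + apply open_C; auto.
    + apply open_C; auto.
    + intros S n q Sn. apply cycle_is_comp; auto. apply q.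
    + intros S n q Sn. apply cycle_is_comp; auto. apply q.
  - apply (rep_glue (is_fwd_cycle k) (is_fwd_cycle g) (meets W) (Rf k W) (Rf g W) (comp k) (comp g)).
    + intros S m. apply not_meets_avoids in m. split; [apply (proj1 (proj2 (Q_tr k g W S r2 r1 m)))|apply (proj1 (proj2 (Q_tr g k W S r1 r2 m)))].
    + intros n; split; apply Rf_tr; auto.
    + apply fwd_E; auto.
    + apply fwd_E; auto.
    + intros S n n' q Sn Sn' [h _] [h' _]. apply (rep_unique k Hk W S); auto. apply q.
    + intros S n n' q Sn Sn' [h _] [h' _]. apply (rep_unique g Hg W S); auto. apply q.
    + apply fwd_C; auto.
    + apply fwd_C; auto.
    + intros S n q Sn. apply cycle_is_comp; auto. apply q.
    + intros S n q Sn. apply cycle_is_comp; auto. apply q.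
  - destruct (bound k W) as [N1 h1]. destruct (bound g W) as [N2 h2].
    exists (max N1 N2). intros n hn.
    apply (rep_glue (is_n_cycle k n) (is_n_cycle g n) (meets W) (fun _ => False) (fun _ => False) (comp k) (comp g));
      try tauto.
    + intros S m. apply not_meets_avoids in m. split; [apply (proj2 (proj2 (Q_tr k g W S r2 r1 m)))|apply (proj2 (proj2 (Q_tr g k W S r1 r2 m)))].
    + intros S q m. specialize (h1 n S q m). lia.
    + intros S q m. specialize (h2 n S q m). lia.
    + intros S m q Sm. apply cycle_is_comp; auto. apply q.
    + intros S m q Sm. apply cycle_is_comp; auto. apply q.
  - intros n _ nsc. 
    assert (He : forall S, ~ meets W S -> (is_n_cycle k n S <-> is_n_cycle g n S)).
    { intros S m. apply not_meets_avoids in m. split; [apply (proj2 (proj2 (Q_tr k g W S r2 r1 m)))|apply (proj2 (proj2 (Q_tr g k W S r1 r2 m)))]. }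
    assert (F1 : fin (fun S => is_n_cycle k n S /\ meets W S)).
    { destruct (fin_meet k W) as [l hl]. exists l. intros S [[c _] m]. apply hl; auto. }
    assert (F2 : fin (fun S => is_n_cycle g n S /\ meets W S)).
    { destruct (fin_meet g W) as [l hl]. exists l. intros S [[c _] m]. apply hl; auto. }
    assert (X1 : forall P : subset -> Prop, fin (fun S => P S /\ meets W S) -> ~ fin P -> ~ fin (fun S => P S /\ ~ meets W S)).
    { intros P [l1 h1] nf [l2 h2]. apply nf. exists (l1 ++ l2). intros S PS. apply in_or_app.
      destruct (classic (meets W S)); [left; apply h1|right; apply h2]; auto. }
    split.
    + apply NNPP; intro nf. apply nsc. apply (hotel (fun _ => False) _ _ (meets W)); auto.
    + apply NNPP; intro nf. apply nsc. apply iso_sym. apply (hotel (fun _ => False) _ _ (meets W)); auto.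
      intros S m; symmetry; auto.
Qed.


Definition conj_hyp (f k H Hi : nat -> nat) :=
  (forall x, Hi (H x) = x) /\ (forall y, H (Hi y) = y) /\ (forall x, H (f x) = k (H x)).

Lemma conj_sym f k H Hi : conj_hyp f k H Hi -> conj_hyp k f Hi H.
Proof.
  intros (a & b & c). split; auto. split; auto. intros y.
  rewrite <- (b y) at 1. rewrite <- c. apply a.
Qed.

Section Conj.
Variables f k H Hi : nat -> nat.
Hypothesis HC : conj_hyp f k H Hi.

Lemma conj_closed S : f_closed f S -> f_closed k (fun y => S (Hi y)).
Proof.
  destruct HC as (a & b & c). intros cl y. simpl.
  rewrite <- (b y) at 1. rewrite <- c, a. apply cl.
Qed.
End Conj.

Lemma conj_cycle f k H Hi S : conj_hyp f k H Hi -> is_cycle f S -> is_cycle k (fun y => S (Hi y)).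
Proof.
  intros HC (ne & cl & mn). pose proof HC as (a & b & c).
  split; [destruct ne as [x Sx]; exists (H x); rewrite a; auto|]. split; [apply (conj_closed f k H Hi); auto|].
  intros (T & sub & (y & Sy & nTy) & (t & Tt) & clT). apply mn.
  exists (fun x => T (H x)). split; [|split; [|split]].
  - intros x Tx. apply sub in Tx. rewrite a in Tx. auto.
  - exists (Hi y). rewrite b. auto.
  - exists (Hi t). rewrite b; auto.
  - apply (conj_closed k f Hi H); auto. apply conj_sym; auto.
Qed.

Lemma conj_card f k H Hi S n : conj_hyp f k H Hi -> has_card S n -> has_card (fun y => S (Hi y)) n.
Proof.
  intros (a & b & c) (l & d & e & h). exists (map H l). split; [|split].
  - apply Injective_map_NoDup; auto. intros x y ex. rewrite <- (a x), ex, a. auto.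
  - rewrite length_map; auto.
  - intros y. rewrite h, in_map_iff. split.
    + intros i. exists (Hi y); auto.
    + intros [x [<- i]]. rewrite a; auto.
Qed.

Lemma conj_inf f k H Hi S : conj_hyp f k H Hi -> is_infinite_subset S -> is_infinite_subset (fun y => S (Hi y)).
Proof.
  intros (a & b & c) inf [l h]. apply inf. exists (map Hi l). intros x Sx. apply in_map_iff.
  exists (H x). rewrite a. split; auto. apply h. rewrite a; auto.
Qed.

Lemma conj_fwd f k H Hi S : conj_hyp f k H Hi -> is_fwd_cycle f S -> is_fwd_cycle k (fun y => S (Hi y)).
Proof.
  intros HC (cy & inf & x & Sx & nx). pose proof HC as (a & b & c).
  split; [apply (conj_cycle f k H Hi); auto|split; [apply (conj_inf f k H Hi); auto|]].
  exists (H x). rewrite a. split; auto. intros y e. apply (nx (Hi y)).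
  rewrite <- (b y) in e. rewrite <- c in e. rewrite <- (a (f (Hi y))), e, a. auto.
Qed.

Lemma back_eq (S : subset) (H Hi : nat -> nat) : (forall x, Hi (H x) = x) -> (fun x => (fun y => S (Hi y)) (H x)) = S.
Proof. intros a. apply functional_extensionality; intros x. rewrite a; auto. Qed.

Lemma conj_open f k H Hi S : conj_hyp f k H Hi -> is_open_cycle f S -> is_open_cycle k (fun y => S (Hi y)).
Proof.
  intros HC (cy & inf & nf). pose proof HC as (a & b & c).
  split; [apply (conj_cycle f k H Hi); auto|split; [apply (conj_inf f k H Hi); auto|]].
  intros h. apply nf. apply (conj_fwd k f Hi H) in h; [|apply conj_sym; auto].
  rewrite back_eq in h; auto.
Qed.

Lemma conj_iso f k H Hi (Q : (nat -> nat) -> subset -> Prop) :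
  (forall f k H Hi S, conj_hyp f k H Hi -> Q f S -> Q k (fun y => S (Hi y))) ->
  conj_hyp f k H Hi -> iso (Q f) (Q k) /\ (fin (Q k) -> fin (Q f)).
Proof.
  intros HQ HC. pose proof HC as (a & b & c). pose proof (conj_sym _ _ _ _ HC) as HC'. split.
  - apply (iso_lift _ _ (fun S y => S (Hi y)) (fun T x => T (H x))).
    + intros S q. apply (HQ f k H Hi); auto.
    + intros T q. apply (HQ k f Hi H); auto.
    + intros S _. apply back_eq; auto.
    + intros T _. apply back_eq; auto.
  - intros [l h]. exists (map (fun T x => T (H x)) l). intros S q. apply in_map_iff.
    exists (fun y => S (Hi y)). split; [apply back_eq; auto|]. apply h. apply (HQ f k H Hi); auto.
Qed.

Lemma approx_conj f k g H Hi : conj_hyp f k H Hi -> approx_fin k g -> approx_fin f g.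
Proof.
  intros HC (o & w & (N & hN) & hf).
  destruct (conj_iso f k H Hi is_open_cycle conj_open HC) as [o1 _].
  destruct (conj_iso f k H Hi is_fwd_cycle conj_fwd HC) as [w1 _].
  assert (nc : forall n, iso (is_n_cycle f n) (is_n_cycle k n) /\ (fin (is_n_cycle k n) -> fin (is_n_cycle f n))).
  { intros n. apply (conj_iso f k H Hi (fun f => is_n_cycle f n)); auto.
    intros f' k' H' Hi' S hc (cy & cd). split; [apply (conj_cycle f' k' H' Hi'); auto|apply (conj_card f' k' H' Hi'); auto]. }
  split; [|split; [|split]].
  - exact (iso_trans _ _ _ o1 o).
  - exact (iso_trans _ _ _ w1 w).
  - exists N. intros n hn. exact (iso_trans _ _ _ (proj1 (nc n)) (hN n hn)).
  - intros n hn ns. destruct (nc n) as [i1 fi].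
    assert (ns' : ~ same_card (is_n_cycle k n) (is_n_cycle g n)).
    { intros s. apply ns. exact (iso_trans _ _ _ i1 s). }
    destruct (hf n hn ns') as [F1 F2]. split; auto. apply fi; auto.
Qed.

Lemma inj_closed (t : nat -> nat) W : (forall x y, t x = t y -> x = y) -> (forall x, ~ In x W -> t x = x) ->
  forall x, In x W -> In (t x) W.
Proof.
  intros ti tf x xW. apply NNPP; intro h. pose proof (tf _ h) as e. apply ti in e. rewrite e in h; auto.
Qed.

Theorem mainTheorem8 (f g h hinv h1 h2 : Omega -> Omega) :
  is_inj f -> is_inj g ->
  is_sym_with_inv h hinv -> is_fin_perm h1 -> is_fin_perm h2 ->
  (forall x, f x = hinv (h2 (g (h1 (h x))))) ->
  approx_fin f g.
Proof.
  intros Hf Hg [ha hb] [[h1i [a1 b1]] [l1 L1]] [[h2i [a2 b2]] [l2 L2]] Hfx.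
  set (W := l1 ++ l2).
  set (s := fun x => h1 (h2 x)). set (si := fun x => h2i (h1i x)).
  set (k := fun y => g (s y)).
  assert (sinj : forall x y, s x = s y -> x = y).
  { unfold s; intros x y e. rewrite <- (a2 x), <- (a2 y), <- (a1 (h2 x)), <- (a1 (h2 y)), e. auto. }
  assert (siinj : forall x y, si x = si y -> x = y).
  { unfold si; intros x y e. rewrite <- (b1 x), <- (b1 y), <- (b2 (h1i x)), <- (b2 (h1i y)), e. auto. }
  assert (sfix : forall x, ~ In x W -> s x = x).
  { intros x hx. unfold s. assert (~ In x l1) by (intro; apply hx; apply in_or_app; auto).
    assert (~ In x l2) by (intro; apply hx; apply in_or_app; auto).
    destruct (classic (h2 x = x)) as [e|e]; [|exfalso; auto]. rewrite e.
    destruct (classic (h1 x = x)) as [e'|e']; [|exfalso; auto]. auto. }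
  assert (sifix : forall x, ~ In x W -> si x = x).
  { intros x hx. unfold si. assert (~ In x l1) by (intro; apply hx; apply in_or_app; auto).
    assert (~ In x l2) by (intro; apply hx; apply in_or_app; auto).
    assert (e1 : h1i x = x).
    { destruct (classic (h1 x = x)) as [e|e]; [|exfalso; auto]. rewrite <- e at 1. auto. }
    rewrite e1. destruct (classic (h2 x = x)) as [e|e]; [|exfalso; auto]. rewrite <- e at 1. auto. }
  assert (Hk : is_inj k). { intros x y e. apply Hg in e. auto. }
  assert (r1 : rel g k W). { exists s. split; auto. split; auto. apply inj_closed; auto. }
  assert (r2 : rel k g W).
  { exists si. split; [|split; auto; apply inj_closed; auto].
    intros x. unfold k, s, si. rewrite b2, b1. auto. }
  apply (approx_conj f k g (fun x => h2i (h x)) (fun y => hinv (h2 y))).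
  - split; [|split].
    + intros x. rewrite b2. auto.
    + intros y. rewrite hb. auto.
    + intros x. rewrite Hfx, hb, a2. unfold k, s. rewrite b2. auto.
  - apply (pair_approx g k W); auto.
Qed.
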